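(* Let $G=(V,E)$ be a graph with edge weights, let $V_{cover}\subseteq V$ be a vertex cover of $G$, and let $G'$ be the subgraph consisting of all edges of $G$ between vertices of $V_{cover}$ together with, for each vertex $u\in V_{cover}$, the $|V_{cover}|+1$ maximum weight edges from $u$ to vertices in $V\setminus V_{cover}$ (all such edges if there are fewer). If $M'$ is a $(1+\epsilon)$-approximate maximum weight matching in $G'$, then it is also a $(1+\epsilon)$-approximate maximum weight matching in $G$.
   Context: A vertex cover is a set of vertices containing at least one endpoint of every edge. For a matching $M$, $w(M)=\sum_{e\in M}w(e)$; $M$ is a $(1+\epsilon)$-approximate maximum weight matching of $H$ if $w(M)\ge\frac{1}{1+\epsilon}$ times the maximum weight of a matching of $H$. *)

(* Defs.v *)
From mathcomp Require Import all_boot all_order all_algebra.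
Set Implicit Arguments. Unset Strict Implicit. Unset Printing Implicit Defensive.
Import Order.TTheory GRing.Theory Num.Theory.
Local Open Scope ring_scope.

Section Defs.
Variable T : finType.

Definition simple_graph (E : {set {set T}}) : Prop :=
  forall e, e \in E -> #|e| = 2%N.

Definition vertex_cover (E : {set {set T}}) (C : {set T}) : Prop :=
  forall e, e \in E -> e :&: C != set0.

Definition matching (E : {set {set T}}) (M : {set {set T}}) : Prop :=
  M \subset E /\
  forall e1 e2, e1 \in M -> e2 \in M -> e1 != e2 -> [disjoint e1 & e2].

Definition mweight (R : numDomainType) (w : {set T} -> R) (M : {set {set T}}) : R :=
  \sum_(e in M) w e.

Definition approx_mwm (R : realFieldType) (E : {set {set T}}) (w : {set T} -> R)
  (eps : R) (M : {set {set T}}) : Prop :=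
  matching E M /\
  forall M', matching E M' -> (1 + eps)^-1 * mweight w M' <= mweight w M.

Definition out_edges (E : {set {set T}}) (C : {set T}) (u : T) : {set {set T}} :=
  [set e in E | (u \in e) && [disjoint (e :\ u) & C]].

(* S is a choice of the k maximum-weight edges among the edges in F
   (all of them if there are fewer than k); ties broken arbitrarily. *)
Definition top_edges (R : realDomainType) (w : {set T} -> R) (k : nat)
  (F S : {set {set T}}) : Prop :=
  [/\ S \subset F, #|S| = minn k #|F| &
      forall e f, e \in S -> f \in F :\: S -> w f <= w e].

Definition sparsified (E : {set {set T}}) (C : {set T})
  (S : T -> {set {set T}}) : {set {set T}} :=
  [set e in E | e \subset C] :|: \bigcup_(u in C) S u.

End Defs.

(* Main.v *)
Require Import Defs.
From mathcomp Require Import all_boot all_order all_algebra.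
From mathcomp Require Import zify.
Import Order.TTheory GRing.Theory Num.Theory.
Local Open Scope ring_scope.

Section L.
Variables (R : realFieldType) (T : finType) (E : {set {set T}})
  (w : {set T} -> R) (C : {set T}) (S : T -> {set {set T}}).
Hypothesis sg : simple_graph E.
Hypothesis vc : vertex_cover E C.
Hypothesis top : forall u, u \in C -> top_edges w #|C|.+1 (out_edges E C u) (S u).

Lemma pair_eq (e : {set T}) u x : #|e| = 2%N -> u \in e -> x \in e -> x != u ->
  e = [set u; x].
Proof.
move=> he hu hx hxu; apply/esym/eqP; rewrite eqEcard cards2 eq_sym hxu he andbT.
by apply/subsetP => y; rewrite !inE => /orP[]/eqP->.
Qed.

Lemma G'_sub : sparsified E C S \subset E.
Proof.
apply/subsetP => e; rewrite /sparsified inE => /orP[].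
  by rewrite inE => /andP[].
move/bigcupP => [u uC eS]; have [sS _ _] := top _ uC.
by move: eS => /(subsetP sS); rewrite inE => /andP[].
Qed.

Lemma match_card M : matching E M -> (#|M| <= #|C|)%N.
Proof.
move=> [sME dis].
pose k (g : {set T}) := [pick x in g :&: C].
have kP : forall g, g \in M -> exists x, k g = Some x /\ x \in g :&: C.
  move=> g gM; rewrite /k; case: pickP => [x hx|none]; first by exists x.
  have /set0Pn [x hx] := vc _ (subsetP sME _ gM).
  by move: (none x); rewrite hx.
have inj : {in M &, injective k}.
  move=> g1 g2 h1 h2 eqk.
  have [x1 [k1 x1in]] := kP _ h1; have [x2 [k2 x2in]] := kP _ h2.
  case: (eqVneq g1 g2) => // ne.
  have d := dis _ _ h1 h2 ne.
  move: x1in; rewrite inE => /andP[x1g _].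
  move: eqk; rewrite k1 k2 => -[ex].
  move: x2in; rewrite inE -ex => /andP[x1g2 _].
  by move: (disjointFr d x1g); rewrite x1g2.
rewrite -(card_in_imset inj).
have sub : k @: M \subset Some @: C.
  apply/subsetP => o /imsetP [g gM ->].
  have [x [-> ]] := kP _ gM; rewrite inE => /andP[_ xC].
  by apply/imsetP; exists x.
apply: (leq_trans (subset_leq_card sub)).
by rewrite card_imset //; move=> a b [].
Qed.

Lemma step M' e : matching E M' -> e \in M' -> e \notin sparsified E C S ->
  exists f, [/\ f \in sparsified E C S, w e <= w f, f \notin M' :\ e &
     matching E (f |: (M' :\ e))].
Proof.
move=> hm eM eG.
have [sME dis] := hm.
have eE : e \in E by apply: (subsetP sME).
have /set0Pn [u] := vc _ eE; rewrite inE => /andP[ue uC].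
move: eG; rewrite /sparsified !inE negb_or eE /= => /andP[esC eS].
have eSu : e \notin S u.
  by apply: contra eS => h; apply/bigcupP; exists u.
move: esC => /subsetPn [v ve vC].
have vu : v != u by apply: contraNneq vC => ->.
have he : e = [set u; v] by apply: pair_eq => //; apply: sg.
have eF : e \in out_edges E C u.
  rewrite /out_edges inE eE ue /= he setU1K; first by rewrite disjoints1.
  by rewrite in_set1 eq_sym.
have [sS cardS maxS] := top _ uC.
have eFS : e \in out_edges E C u :\: S u by rewrite inE eSu eF.
have lt : (#|S u| < #|out_edges E C u|)%N.
  apply: proper_card; rewrite properE sS /=.
  by apply/negP => /subsetP /(_ _ eF); rewrite (negbTE eSu).
have cS : #|S u| = #|C|.+1 by move: cardS lt; clear; lia.
have cM := match_card _ hm.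
have cM' : #|M'| = (1 + #|M' :\ e|)%N by rewrite (cardsD1 e M') eM.
case: (boolP [exists f in S u, [forall g in M' :\ e, [disjoint f & g]]]).
  move=> /existsP [f /andP[fS /forallP fd]].
  have fF := subsetP sS _ fS.
  have uf : u \in f by move: fF; rewrite inE => /andP[_ /andP[]].
  exists f; split.
  - by rewrite /sparsified inE; apply/orP; right; apply/bigcupP; exists u.
  - exact: maxS.
  - apply/negP => fin; move: (fd f); rewrite fin /= => /disjointFr /(_ uf).
    by rewrite uf.
  - split.
      apply/subsetP => g; rewrite in_setU1 => /orP[/eqP->|/setD1P[_ gM]].
        by move: fF; rewrite inE => /andP[].
      exact: (subsetP sME).
    move=> g1 g2; rewrite !in_setU1 => /orP[/eqP->|h1] /orP[/eqP->|h2] ne.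
    + by rewrite eqxx in ne.
    + by move: (fd g2); rewrite h2.
    + by rewrite disjoint_sym; move: (fd g1); rewrite h1.
    + move: h1 h2 => /setD1P[_ h1] /setD1P[_ h2]; exact: dis.
move=> hneg; exfalso.
pose h (f : {set T}) := odflt set0 [pick g in M' :\ e | ~~ [disjoint f & g]].
have hP : forall f, f \in S u -> h f \in M' :\ e /\ ~~ [disjoint f & h f].
  move=> f fS; move: hneg; rewrite negb_exists => /forallP /(_ f).
  rewrite fS /= negb_forall => /existsP [g]; rewrite negb_imply => /andP[gin nd].
  rewrite /h; case: pickP => [g' /andP[]|/(_ g)]; first by [].
  by rewrite gin nd.
have inj : {in S u &, injective h}.
  move=> f1 f2 f1S f2S eqh.
  have [g1in nd1] := hP _ f1S; have [_ nd2] := hP _ f2S.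
  move: nd2; rewrite -eqh => nd2.
  set g := h f1 in g1in nd1 nd2.
  move: g1in => /setD1P [ge gM].
  have gE : g \in E by apply: (subsetP sME).
  have ug : u \notin g.
    move: (dis _ _ eM gM); rewrite eq_sym ge => /(_ isT) /disjointFr /(_ ue).
    by move=> ->.
  have key : forall f, f \in S u -> ~~ [disjoint f & g] ->
      exists y, [/\ y \in g, y \notin C, y != u & f = [set u; y]].
    move=> f fS nd.
    move: nd; rewrite -setI_eq0 => /set0Pn [y]; rewrite inE => /andP[yf yg].
    have yu : y != u by apply: contraNneq ug => <-.
    have fF := subsetP sS _ fS.
    move: fF; rewrite inE => /andP[fE /andP[uf dC]].
    exists y; split => //.
      by rewrite (disjointFr dC) // !inE yu.
    by apply: pair_eq => //; apply: sg.
  have [y [yg yC yu ->]] := key _ f1S nd1.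
  have [z [zg zC zu ->]] := key _ f2S nd2.
  have /set0Pn [c] := vc _ gE; rewrite inE => /andP[cg cC].
  have yc : y != c by apply: contraNneq yC => ->.
  have hg : g = [set c; y] by apply: pair_eq => //; apply: sg.
  move: zg; rewrite hg !inE => /orP[/eqP zc|/eqP -> //].
  by rewrite zc cC in zC.
have sub : h @: S u \subset M' :\ e.
  by apply/subsetP => g /imsetP [f fS ->]; case: (hP _ fS).
move: (subset_leq_card sub); rewrite card_in_imset // cS.
move=> le; move: cM; rewrite cM' add1n => cM.
by have := leq_ltn_trans cM le; rewrite ltnNge leqnSn.
Qed.

Lemma exists_G' n : forall M', matching E M' ->
  #|M' :\: sparsified E C S| = n ->
  exists M'', matching (sparsified E C S) M'' /\ mweight w M' <= mweight w M''.
Proof.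
elim: n => [|n IH] M' hm hc.
  exists M'; split => //.
  have [_ hd] := hm; split => //.
  by rewrite -setD_eq0 -cards_eq0 hc.
have : M' :\: sparsified E C S != set0 by rewrite -card_gt0 hc.
move=> /set0Pn [e] /setDP [eM eG].
have [f [fG wef fn hm1]] := step _ _ hm eM eG.
have hc1 : #|(f |: (M' :\ e)) :\: sparsified E C S| = n.
  rewrite (_ : (f |: (M' :\ e)) :\: sparsified E C S = (M' :\: sparsified E C S) :\ e).
    by move: hc; rewrite (cardsD1 e) inE eM eG /=; case.
  apply/setP => x; rewrite !in_setD in_setU1 !in_setD1.
  case: eqP => [->|_]; first by rewrite fG andbF.
  by rewrite in_set1 /=; case: (x \in M'); case: (x \in sparsified E C S); case: (x == e).
have [M'' [hM'' wle]] := IH _ hm1 hc1.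
exists M''; split => //.
apply: le_trans wle.
by rewrite /mweight (big_setD1 e eM) big_setU1 //= lerD2r.
Qed.

End L.

Theorem lemma15 (R : realFieldType) (T : finType) (E : {set {set T}})
  (w : {set T} -> R) (C : {set T}) (S : T -> {set {set T}}) (eps : R)
  (M : {set {set T}}) :
  simple_graph E ->
  vertex_cover E C ->
  (forall u, u \in C -> top_edges w #|C|.+1 (out_edges E C u) (S u)) ->
  0 < eps ->
  approx_mwm (sparsified E C S) w eps M ->
  approx_mwm E w eps M.
Proof.
move=> sg vc top eps0 [[sM dM] hM]; split.
  split => //; apply: subset_trans sM _; exact: (@G'_sub R T E w C S top).
move=> M' hm.
have [M'' [hm'' le'']] := @exists_G' R T E w C S sg vc top _ M' hm (erefl _).
apply: le_trans (hM _ hm'').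
apply: ler_wpM2l => //.
by rewrite invr_ge0; apply: addr_ge0 => //; apply: ltW.
Qed.
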